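(* Let $G$ be a finite graph whose edges are totally ordered and labelled $e_1<e_2<\dots<e_m$. Suppose that for some $i$ and some $k>0$ the edges $e_i,e_{i+1},\dots,e_{i+k}$ are all positive, all join the same two distinct vertices $x,y$ of $G$, and no other edge of $G$ joins $x$ and $y$. Let $S$ be any spanning tree of $G$. Then the subword $a(e_i,S)a(e_{i+1},S)\cdots a(e_{i+k},S)$ of the activity word $a(S)$ is one of the following: (1) when $S$ contains none of $e_i,\dots,e_{i+k}$: $\ell\ell\cdots\ell$ or $dd\cdots d$ (all $k+1$ letters equal); (2) when $S$ contains exactly the edge $e_{i+j}$ among them, for some $0<j\le k$: $\ell^{j}\,D\,d^{k-j}$, i.e. $e_i,\dots,e_{i+j-1}$ are labelled $\ell$, $e_{i+j}$ is labelled $D$, and $e_{i+j+1},\dots,e_{i+k}$ are labelled $d$; (3) when $S$ contains exactly the first edge $e_i$ among them: $L\,d^{k}$ or $D\,d^{k}$.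
   Context: Tutte's activity: let $G$ be a graph with signed edges (each edge positive or negative) whose $m$ edges are totally ordered. For a spanning tree $S$ of $G$ and an edge $e$: if $e\in S$ and $e$ is positive, $e$ is internally active, letter $L$, if $e$ is the lowest-ordered edge of $G$ that reconnects the two components of $S-\{e\}$, and internally inactive, letter $D$, otherwise. If $e\notin S$ and $e$ is positive, $e$ is externally active, letter $\ell$, if $e$ is the lowest-ordered edge of the unique cycle contained in $S\cup\{e\}$, and externally inactive, letter $d$, otherwise. For negative edges the same rules give the barred letters $\overline{L},\overline{D},\overline{\ell},\overline{d}$. The letter of $e$ is denoted $a(e,S)$, and the activity word $a(S)$ is the word of length $m$ whose $r$-th letter is $a(e_r,S)$. *)

(* Defs.v *)
(* A finite multigraph (loops and parallel edges allowed)
   with vertex set a finType V and m edges indexed by 'I_m; the total order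
   on edges is the order of the indices (e_r = edge r, 0-indexed).
   Edge r joins src r and tgt r; sgn r = true means edge r is positive. *)
From mathcomp Require Import all_boot.
Set Implicit Arguments. Unset Strict Implicit. Unset Printing Implicit Defensive.

Section Graph.
Variables (V : finType) (m : nat) (src tgt : 'I_m -> V) (sgn : 'I_m -> bool).

Definition joins (f : 'I_m) (u v : V) : bool :=
  ((src f == u) && (tgt f == v)) || ((src f == v) && (tgt f == u)).

Definition adj (F : {set 'I_m}) : rel V :=
  fun u v => [exists f in F, joins f u v].

Definition conn (F : {set 'I_m}) (u v : V) : bool := connect (adj F) u v.

(* F is acyclic: no edge of F lies on a cycle of F, i.e. removing any edge f
   of F disconnects its endpoints (a loop is a cycle). *)
Definition forest (F : {set 'I_m}) : bool :=
  [forall f in F, ~~ conn (F :\ f) (src f) (tgt f)].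

Definition spanning_tree (S : {set 'I_m}) : bool :=
  forest S && [forall u, forall v, conn S u v].

Definition circuit (C : {set 'I_m}) : bool :=
  ~~ forest C && [forall f in C, forest (C :\ f)].

Definition reconnects (S : {set 'I_m}) (e f : 'I_m) : bool :=
  let S' := S :\ e in
  (conn S' (src e) (src f) && conn S' (tgt e) (tgt f)) ||
  (conn S' (src e) (tgt f) && conn S' (tgt e) (src f)).

Definition int_active (S : {set 'I_m}) (e : 'I_m) : bool :=
  [forall f, reconnects S e f ==> (val e <= val f)].

Definition ext_active (S : {set 'I_m}) (e : 'I_m) : bool :=
  [exists C : {set 'I_m},
     [&& circuit C, C \subset e |: S, e \in C & [forall f in C, val e <= val f]]].

End Graph.

Inductive letter := L | D | l | d | Lbar | Dbar | lbar | dbar.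

Definition act_letter (V : finType) (m : nat) (src tgt : 'I_m -> V)
  (sgn : 'I_m -> bool) (e : 'I_m) (S : {set 'I_m}) : letter :=
  if e \in S then
    (if int_active src tgt S e then (if sgn e then L else Lbar)
     else (if sgn e then D else Dbar))
  else
    (if ext_active src tgt S e then (if sgn e then l else lbar)
     else (if sgn e then d else dbar)).

(* Main.v *)
Require Import Defs.
From mathcomp Require Import all_boot zify.
From mathcomp Require Import fingroup perm.
Set Implicit Arguments. Unset Strict Implicit. Unset Printing Implicit Defensive.

Section H.
Variables (V : finType) (m : nat) (src tgt : 'I_m -> V).
Local Notation joins := (joins src tgt).
Local Notation adj := (adj src tgt).
Local Notation conn := (conn src tgt).
Local Notation forest := (forest src tgt).
Local Notation circuit := (circuit src tgt).

Lemma joins_sym f u v : joins f u v = joins f v u.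
Proof. by rewrite /joins orbC. Qed.

Lemma adj_sym (F : {set 'I_m}) : symmetric (adj F).
Proof. by move=> u v; rewrite /adj; apply/existsP/existsP => -[f]; exists f; rewrite joins_sym. Qed.

Lemma conn_sym (F : {set 'I_m}) u v : conn F u v = conn F v u.
Proof. exact: (sym_connect_sym (adj_sym F)). Qed.

Lemma joins_end f : joins f (src f) (tgt f).
Proof. by rewrite /joins !eqxx. Qed.

Lemma joins_eq f g : joins f =2 joins g ->
  (src g = src f /\ tgt g = tgt f) \/ (src g = tgt f /\ tgt g = src f).
Proof.
move=> h; have := joins_end g; rewrite -h /joins.
by case/orP => /andP[/eqP-> /eqP->]; [left|right].
Qed.

Lemma conn_ends (H : {set 'I_m}) f g : joins f =2 joins g ->
  conn H (src g) (tgt g) = conn H (src f) (tgt f).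
Proof. by case/joins_eq => -[-> ->] //; rewrite conn_sym. Qed.

Lemma joins_xy f g x y : joins f x y -> joins g x y -> joins f =2 joins g.
Proof.
move=> + + u v; rewrite /joins; case/orP => /andP[/eqP-> /eqP->];
case/orP => /andP[/eqP-> /eqP->] //;
  first [by rewrite !(andbC (y == _)) orbC | by rewrite !(andbC (x == _)) orbC].
Qed.

Lemma conn_mono (F G : {set 'I_m}) : F \subset G -> forall u v, conn F u v -> conn G u v.
Proof.
move=> FG u v; apply: connect_sub => a b /existsP [f /andP[fF j]].
by apply: connect1; apply/existsP; exists f; rewrite (subsetP FG _ fF).
Qed.

Lemma forest_sub (F G : {set 'I_m}) : F \subset G -> forest G -> forest F.
Proof.
move=> FG /forallP hG; apply/forallP => f; apply/implyP => fF.
move: (hG f); rewrite (subsetP FG _ fF) /=; apply: contra.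
by apply: conn_mono; apply: setSD.
Qed.

Lemma conn0 u v : conn set0 u v -> u = v.
Proof.
case/connectP => -[|z p] //= /andP[/existsP[f /andP[]]].
by rewrite inE.
Qed.

Lemma forest1 g : src g != tgt g -> forest [set g].
Proof.
move=> ne; apply/forallP => f; apply/implyP; rewrite inE => /eqP->.
rewrite setDv; apply/negP => /conn0 /eqP; by apply/negP.
Qed.

Variable (s : 'I_m -> 'I_m).
Hypothesis sK : involutive s.
Hypothesis sJ : forall f, joins (s f) =2 joins f.

Lemma adj_perm (F : {set 'I_m}) : adj (s @^-1: F) =2 adj F.
Proof.
move=> u v; apply/existsP/existsP => [[g /andP[gF j]] | [f /andP[fF j]]].
  by exists (s g); rewrite inE in gF; rewrite gF sJ.
by exists (s f); rewrite inE sK fF sJ.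
Qed.

Lemma conn_perm (F : {set 'I_m}) : conn (s @^-1: F) =2 conn F.
Proof. exact: eq_connect (adj_perm F). Qed.

Lemma preD (F : {set 'I_m}) f : (s @^-1: F) :\ f = s @^-1: (F :\ s f).
Proof.
apply/setP => z; rewrite !inE; congr andb.
by rewrite (inj_eq (can_inj sK)).
Qed.

Lemma forest_perm (F : {set 'I_m}) : forest (s @^-1: F) = forest F.
Proof.
apply/forallP/forallP => h f; apply/implyP => fF.
  have := h (s f); rewrite inE sK fF /= preD sK conn_perm.
  by rewrite (conn_ends _ (sJ f)).
rewrite inE in fF; have := h (s f); rewrite fF /= preD conn_perm.
by rewrite (@conn_ends _ f (s f) (fun u v => esym (sJ f u v))).
Qed.

Lemma circuit_perm (C : {set 'I_m}) : circuit (s @^-1: C) = circuit C.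
Proof.
rewrite /circuit forest_perm; congr andb.
apply/forallP/forallP => h f; apply/implyP => fF.
  by have := h (s f); rewrite inE sK fF /= preD sK forest_perm.
by rewrite inE in fF; have := h (s f); rewrite fF /= preD forest_perm.
Qed.
End H.

Theorem lemma3p2 (V : finType) (m : nat) (src tgt : 'I_m -> V)
  (sgn : 'I_m -> bool) (i k : nat) (x y : V) (S : {set 'I_m}) :
  (0 < k)%N -> (i + k < m)%N -> x != y ->
  (forall e : 'I_m, (i <= val e <= i + k)%N -> sgn e /\ joins src tgt e x y) ->
  (forall e : 'I_m, joins src tgt e x y -> (i <= val e <= i + k)%N) ->
  spanning_tree src tgt S ->
  let a := fun e : 'I_m => act_letter src tgt sgn e S in
  let blk := fun e : 'I_m => (i <= val e <= i + k)%N in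
  (* (1) S contains none of e_i..e_{i+k}: all l or all d *)
  ((forall e : 'I_m, blk e -> e \notin S) /\
   ((forall e : 'I_m, blk e -> a e = l) \/ (forall e : 'I_m, blk e -> a e = d)))
  \/
  (* (2) S contains exactly e_{i+j}, 0 < j <= k: l^j D d^(k-j) *)
  (exists j : nat, [/\ (0 < j <= k)%N,
     (forall e : 'I_m, blk e -> (e \in S) = (val e == i + j)) &
     (forall e : 'I_m, blk e ->
        a e = if (val e < i + j)%N then l else if val e == i + j then D else d)])
  \/
  (* (3) S contains exactly e_i: L d^k or D d^k *)
  ((forall e : 'I_m, blk e -> (e \in S) = (val e == i)) /\
   (forall e : 'I_m, blk e -> val e = i -> a e = L \/ a e = D) /\
   (forall e : 'I_m, blk e -> (i < val e)%N -> a e = d)).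
Proof.
move=> Hk Him Hxy Hb Hj /andP[HF _] a blk.
have Bj : forall e, blk e -> joins src tgt e x y by move=> e /Hb[].
have Bs : forall e, blk e -> sgn e by move=> e /Hb[].
have BJ : forall e e', blk e -> blk e' -> joins src tgt e =2 joins src tgt e'.
  by move=> e e' be be'; apply: joins_xy (Bj e be) (Bj e' be').
have Bne : forall e, blk e -> src e != tgt e.
  move=> e /Bj; rewrite /joins; case/orP => /andP[/eqP-> /eqP->] //.
  by rewrite eq_sym.
have tpJ : forall e e', blk e -> blk e' ->
    forall f, joins src tgt (tperm e e' f) =2 joins src tgt f.
  move=> e e' be be' f; case: tpermP => [->|->|_ _] //; exact: BJ.
have F1 : forall e e', blk e -> blk e' -> e \in S -> e' \in S -> e = e'.
  move=> e e' be be' eS e'S; apply/eqP/negPn/negP => ne.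
  move/forallP: HF => /(_ e); rewrite eS /=; apply/negP/negPn.
  apply: connect1; apply/existsP; exists e'.
  by rewrite !inE e'S eq_sym ne /= (BJ e' e be' be) joins_end.
have Hi : (i < m)%N by lia.
pose e0 := Ordinal Hi.
have be0 : blk e0 by rewrite /blk /= leqnn leq_addr.
have aS : forall e, e \in S -> blk e ->
    a e = if int_active src tgt S e then L else D.
  by move=> e eS be; rewrite /a /act_letter eS Bs.
have aN : forall e, e \notin S -> blk e ->
    a e = if ext_active src tgt S e then l else d.
  by move=> e eN be; rewrite /a /act_letter (negbTE eN) Bs.
case: (pickP [pred e | (e \in S) && blk e]) => [s /andP[sS bs] | none].
-
  right.
  have Sb : forall e, blk e -> (e \in S) = (e == s).
    by move=> e be; apply/idP/eqP => [eS|->//]; exact: F1.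
  have notS : forall e, blk e -> e != s -> e \notin S by move=> e be; rewrite Sb.
  have A : forall e, blk e -> (val e < val s)%N -> a e = l.
    move=> e be lt; have ne : e != s by apply/eqP => es; rewrite es ltnn in lt.
    rewrite aN ?notS //.
    have -> // : ext_active src tgt S e.
    apply/existsP; exists [set e; s]; apply/and4P; split.
    + apply/andP; split.
      * apply/negP => /forallP/(_ e); rewrite !inE eqxx /=; apply/negP/negPn.
        apply: connect1; apply/existsP; exists s.
        by rewrite !inE eq_sym ne eqxx orbT /= (BJ s e bs be) joins_end.
      * apply/forallP => f; apply/implyP; rewrite !inE => /orP[]/eqP->.
          apply: (forest_sub _ (forest1 (Bne s bs))).
          by apply/subsetP => z; rewrite !inE => /andP[/negbTE ->].
        apply: (forest_sub _ (forest1 (Bne e be))).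
        by apply/subsetP => z; rewrite !inE => /andP[/negbTE ->]; rewrite orbF.
    + by apply/subsetP => z; rewrite !inE => /orP[->//|/eqP->]; rewrite sS orbT.
    + by rewrite !inE eqxx.
    + apply/forallP => f; apply/implyP; rewrite !inE => /orP[]/eqP-> //.
      exact: ltnW.
  have B : (i < val s)%N -> a s = D.
    move=> lt; rewrite aS //.
    have -> // : int_active src tgt S s = false.
    apply/negbTE/negP => /forallP/(_ e0)/implyP.
    have -> : reconnects src tgt S s e0.
      rewrite /reconnects.
      by case: (joins_eq (BJ s e0 bs be0)) => -[-> ->]; rewrite /conn !connect0 ?orbT.
    by move=> /(_ isT); rewrite leqNgt lt.
  have C : forall e, blk e -> (val s < val e)%N -> a e = d.
    move=> e be lt; have ne : e != s by apply/eqP => es; rewrite es ltnn in lt.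
    rewrite aN ?notS //.
    have -> // : ext_active src tgt S e = false.
    apply/negbTE/negP => /existsP[C /and4P[cC sub eC minC]].
    have sC : s \notin C.
      by apply/negP => sC; have := forallP minC s; rewrite sC /= leqNgt lt.
    have cC' : circuit src tgt (tperm e s @^-1: C).
      by rewrite (circuit_perm (tpermK e s) (tpJ e s be bs)).
    have sub' : tperm e s @^-1: C \subset S.
      apply/subsetP => z; rewrite inE; case: tpermP => [->|->|/eqP ze /eqP zs] zC.
      * by rewrite zC in sC.
      * exact: sS.
      * by move/(subsetP sub): zC; rewrite !inE (negbTE ze).
    move: (forest_sub sub' HF); by case/andP: cC' => /negbTE ->.
  case: (eqVneq (val s) i) => [si|sni].
  + right; split; [|split].
    * move=> e be; rewrite Sb // -si; by apply/eqP/eqP => [->|/val_inj].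
    * move=> e be ei; have es : e = s by apply: val_inj; rewrite ei si.
      by rewrite es aS //; case: int_active; auto.
    * by move=> e be lt; apply: C => //; rewrite si.
  + left; exists (val s - i).
    have bs' := bs; rewrite /blk in bs'.
    have iss : (i <= val s)%N by case/andP: bs'.
    split.
    * move: bs' sni; move: (val s) => v /andP[h1 h2] /eqP h3; apply/andP; lia.
    * by move=> e be; rewrite Sb // subnKC //; apply/eqP/eqP => [->|/val_inj].
    * move=> e be; rewrite subnKC //; case: ltnP => lt; first exact: A.
      case: eqP => [eq|ne].
        have -> : e = s by apply: val_inj.
        apply: B; rewrite ltn_neqAle iss andbT eq_sym; exact: sni.
      apply: C => //; rewrite ltn_neqAle lt andbT; apply/eqP => h; exact: ne (esym h).
-
  have nS : forall e, blk e -> e \notin S.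
    by move=> e be; apply/negP => eS; have := none e; rewrite /= eS be.
  have ext_tr : forall e e', blk e -> blk e' ->
      ext_active src tgt S e -> ext_active src tgt S e'.
    move=> e e' be be' /existsP[C /and4P[cC sub eC minC]].
    apply/existsP; exists (tperm e e' @^-1: C).
    rewrite (circuit_perm (tpermK e e') (tpJ e e' be be')) cC /=.
    apply/and3P; split.
    + apply/subsetP => g; rewrite inE => /(subsetP sub); rewrite !inE.
      case: tpermP => [->|->|/eqP/negbTE ge /eqP/negbTE ge'] /=.
      * by rewrite (negbTE (nS e' be')) orbF eq_sym => ->.
      * by rewrite !eqxx.
      * by rewrite ge ge' /= => ->.
    + by rewrite inE tpermR.
    + apply/forallP => g; apply/implyP; rewrite inE => gC.
      have := forallP minC (tperm e e' g); rewrite gC /=.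
      move: gC; case: tpermP => [->|->|/eqP ge /eqP ge'] gC.
      * move/(subsetP sub): gC; rewrite !inE (negbTE (nS e' be')) orbF.
        by move/eqP->.
      * by rewrite leqnn.
      * have gS : g \in S by move/(subsetP sub): gC; rewrite !inE (negbTE ge).
        have nb : ~~ blk g by apply/negP => bg; move: (nS g bg); rewrite gS.
        move: be be' nb; rewrite /blk => /andP[h1 h2] /andP[h3 h4]; rewrite negb_and -!ltnNge => h5 h6.

        case/orP: h5 => h5; simpl in *; lia.
  left; split; first by [].
  case: (boolP (ext_active src tgt S e0)) => h; [left|right] => e be;
    rewrite aN ?nS //.
    by rewrite (ext_tr e0 e be0 be h).
  by case: ifP => // /(ext_tr e e0 be be0); rewrite (negbTE h).
Qed.
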